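(* Let $A\in\mathbb{R}_+^{n\times n}$ be irreducible and let $x>0$ be a Perron eigenvector of $A$. Then $$\rho(A)=\max_{B\in\Omega(A)}\rho(B)\iff\big(\forall\,1\le i,j,k\le n:\ x_k<x_j\Rightarrow a_{i,k}\le a_{i,j}\big),$$ and $$\rho(A)=\min_{B\in\Omega(A)}\rho(B)\iff\big(\forall\,1\le i,j,k\le n:\ x_k<x_j\Rightarrow a_{i,k}\ge a_{i,j}\big).$$
   Context: For $A=(a_{i,j})\in\mathbb{R}_+^{n\times n}$ (nonnegative $n\times n$ matrices), $\Omega(A)=\{B\in\mathbb{R}_+^{n\times n}:\ \forall i\ \exists\text{ a permutation }\phi_i\text{ of }\{1,\dots,n\}\text{ with } b_{i,j}=a_{i,\phi_i(j)}\ \forall j\}$. $\rho(B)$ denotes the spectral radius (Perron root) of $B$. A Perron eigenvector of $A$ is a nonzero nonnegative vector $x$ with $Ax=\rho(A)x$. *)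

(* Defs.v *)
From HB Require Import structures.
From mathcomp Require Import all_boot all_order all_algebra all_fingroup.
From mathcomp Require Import complex.
Set Implicit Arguments. Unset Strict Implicit. Unset Printing Implicit Defensive.
Import Order.TTheory GRing.Theory Num.Theory.
Local Open Scope ring_scope.

Section Defs.
Variable R : rcfType.
Variable n : nat.

Definition nonneg_mx (A : 'M[R]_n) : Prop := forall i j, 0 <= A i j.

Definition eigenvalues (B : 'M[R]_n) : seq R[i] :=
  sval (closed_field_poly_normal
          (char_poly (map_mx (fun r : R => (r%:C)%C) B))).

(* Spectral radius: max modulus of the complex eigenvalues (0 if n = 0). *)
Definition spectral_radius (B : 'M[R]_n) : R :=
  \big[Num.max/0]_(z <- eigenvalues B) Normc.normc z.

Definition irreducible_mx (A : 'M[R]_n) : Prop :=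
  ~ exists S : {set 'I_n},
      [/\ S != set0, S != setT & forall i j, i \in S -> j \notin S -> A i j = 0].

Definition Omega (A B : 'M[R]_n) : Prop :=
  nonneg_mx B /\ forall i, exists phi : 'S_n, forall j, B i j = A i (phi j).

Definition perron_eigenvector (A : 'M[R]_n) (x : 'cV[R]_n) : Prop :=
  [/\ x != 0, forall i, 0 <= x i 0 & A *m x = spectral_radius A *: x].

End Defs.

(* Main.v *)
Require Import Defs.
From HB Require Import structures.
From mathcomp Require Import all_boot all_order all_algebra all_fingroup.
From mathcomp Require Import complex polyrcf.
From mathcomp Require Import ring lra.
From Stdlib Require Import ClassicalEpsilon.
Import Order.TTheory GRing.Theory Num.Theory.
Set Implicit Arguments. Unset Strict Implicit. Unset Printing Implicit Defensive.
Local Open Scope ring_scope.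
Local Open Scope complex_scope.

Lemma horner_char (F : fieldType) n (A : 'M[F]_n) a :
  (char_poly A).[a] = \det (a%:M - A).
Proof.
symmetry; rewrite /char_poly /char_poly_mx /determinant.
rewrite horner_sum; apply: eq_bigr => s _.
rewrite hornerM horner_exp !hornerE; congr (_ * _).
rewrite (big_morph _ (fun p q => hornerM p q a) (hornerC 1 a)).
by apply: eq_bigr => i _; rewrite !mxE !(hornerE, hornerMn).
Qed.

Lemma exists_max (R : realDomainType) (I : finType) (i0 : I) (f : I -> R) :
  exists k, forall j, f j <= f k.
Proof.
case: (@arg_maxP _ _ _ i0 xpredT f isT) => k _ H; exists k => j; exact: H.
Qed.

Section P1.
Variable R : rcfType.

Lemma normcE (z : R[i]) : `|z| = (Normc.normc z)%:C.
Proof. by case: z. Qed.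

Lemma normc_ge0 (z : R[i]) : 0 <= Normc.normc z.
Proof. by case: z => a b /=; rewrite sqrtr_ge0. Qed.

Lemma normc_real (r : R) : Normc.normc (r%:C) = `|r|.
Proof. by rewrite /= expr0n /= addr0 sqrtr_sqr. Qed.

Lemma normc_sum_le n (c : 'I_n -> R) (w : 'I_n -> R[i]) :
  Normc.normc (\sum_j (c j)%:C * w j) <= \sum_j `|c j| * Normc.normc (w j).
Proof.
rewrite -lecR -normcE rmorph_sum; apply: le_trans (ler_norm_sum _ _ _) _.
apply: ler_sum => j _; rewrite normrM !normcE rmorphM /=.
by rewrite expr0n /= addr0 sqrtr_sqr.
Qed.

Lemma eig_vec n (B : 'M[R]_n) l : l \in eigenvalues B ->
  exists w : 'I_n -> R[i], (exists k, w k != 0) /\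
    forall k, \sum_j (B k j)%:C * w j = l * w k.
Proof.
rewrite /eigenvalues; set M := map_mx _ B.
case: closed_field_poly_normal => s Hs /= Hl.
have : root (char_poly M) l.
  rewrite Hs rootZ ?root_prod_XsubC //.
  by rewrite (monicP (char_poly_monic M)) oner_neq0.
rewrite /root horner_char -det_tr => /det0P [v vn0].
rewrite linearB /= tr_scalar_mx mulmxBr mul_mx_scalar => /eqP.
rewrite subr_eq0 => /eqP Hv.
exists (fun j => v 0 j); split.
  apply/existsP; apply: contraNT vn0; rewrite negb_exists => /forallP H.
  apply/eqP/matrixP => i j; rewrite (ord1 i) mxE; exact/eqP/negPn/H.
move=> k; have := congr1 (fun m : 'rV[R[i]]_n => m 0 k) Hv; rewrite !mxE => ->.
by apply: eq_bigr => j _; rewrite !mxE mulrC.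
Qed.


Lemma eig_bound n (B : 'M[R]_n) (z : 'cV[R]_n) s l :
  nonneg_mx B -> (forall i, 0 < z i 0) ->
  (forall i, (B *m z) i 0 <= s * z i 0) ->
  l \in eigenvalues B ->
  Normc.normc l <= s /\
  (s <= Normc.normc l -> exists T : {set 'I_n}, T != set0 /\
      forall k, k \in T -> (B *m z) k 0 = s * z k 0 /\
                           forall j, B k j != 0 -> j \in T).
Proof.
move=> B0 z0 Bz Hl; case: (eig_vec Hl) => w [[k1 wk1] Hw].
pose nw j := Normc.normc (w j).
have nw0 : forall j, 0 <= nw j by move=> j; apply: normc_ge0.
pose u j := nw j / z j 0.
case: (exists_max k1 u) => k0 Hk0; set M := u k0.
have key : forall k, Normc.normc l * nw k <= \sum_j B k j * nw j.
  move=> k; rewrite /nw -Normc.normcM -Hw; apply: le_trans (normc_sum_le _ _) _.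
  by apply: ler_sum => j _; rewrite ger0_norm.
have nwM : forall j, nw j <= M * z j 0.
  by move=> j; rewrite -ler_pdivrMr //; exact: Hk0.
have key2 : forall k, \sum_j B k j * nw j <= M * (B *m z) k 0.
  move=> k; rewrite mxE mulr_sumr; apply: ler_sum => j _; rewrite mulrCA.
  by apply: ler_wpM2l.
have M0 : 0 < M.
  apply: lt_le_trans (Hk0 k1); rewrite /u divr_gt0 // lt_def nw0 andbT.
  by apply: contra wk1 => /eqP /Normc.eq0_normc ->.
have nwk0 : nw k0 = M * z k0 0 by rewrite /M /u divfK ?gt_eqF.
have key3 : forall k, M * (B *m z) k 0 <= s * (M * z k 0).
  by move=> k; rewrite mulrCA; apply: ler_wpM2l; [apply: ltW|].
split.
  have := le_trans (le_trans (key k0) (key2 k0)) (key3 k0).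
  by rewrite nwk0 ler_pM2r // mulr_gt0.
move=> hs; exists [set k | nw k == M * z k 0]; split.
  by apply/set0Pn; exists k0; rewrite inE nwk0.
move=> k; rewrite inE => /eqP nwk.
have e1 : \sum_j B k j * nw j = M * (B *m z) k 0.
  apply/le_anti; rewrite key2 /=; apply: le_trans (key k).
  apply: le_trans (key3 k) _; rewrite -nwk; apply: ler_wpM2r => //.
have e2 : (B *m z) k 0 = s * z k 0.
  apply/le_anti; rewrite Bz /=; rewrite -(ler_pM2l M0) mulrCA -nwk -e1.
  by apply: le_trans (key k); apply: ler_wpM2r.
split=> // j Bkj; rewrite inE.
have : \sum_j0 B k j0 * (M * z j0 0 - nw j0) = 0.
  have -> : \sum_j0 B k j0 * (M * z j0 0 - nw j0) =
    \sum_j0 B k j0 * (M * z j0 0) - \sum_j0 B k j0 * nw j0.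
    by rewrite -sumrB; apply: eq_bigr => i _; rewrite mulrBr.
  rewrite e1 mxE mulr_sumr; apply/eqP; rewrite subr_eq0; apply/eqP.
  by apply: eq_bigr => i _; rewrite mulrCA.
move=> /psumr_eq0P H.
have Hpos : forall i, true -> 0 <= B k i * (M * z i 0 - nw i).
  by move=> i _; apply: mulr_ge0 => //; rewrite subr_ge0.
have /eqP := H Hpos j isT.
by rewrite mulf_eq0 (negPf Bkj) /= subr_eq0 eq_sym.
Qed.

Lemma spec_ub n (B : 'M[R]_n) (z : 'cV[R]_n) s :
  nonneg_mx B -> (forall i, 0 < z i 0) -> 0 <= s ->
  (forall i, (B *m z) i 0 <= s * z i 0) -> spectral_radius B <= s.
Proof.
move=> B0 z0 s0 Bz; rewrite /spectral_radius big_seq; apply: bigmax_le => // l Hl.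
by case: (eig_bound B0 z0 Bz Hl).
Qed.

Lemma spec_ub_strict n (B : 'M[R]_n) (z : 'cV[R]_n) s :
  nonneg_mx B -> (forall i, 0 < z i 0) -> 0 < s ->
  (forall i, (B *m z) i 0 <= s * z i 0) ->
  (forall T : {set 'I_n}, T != set0 -> exists2 k, k \in T &
     ((B *m z) k 0 != s * z k 0 \/ exists2 j, B k j != 0 & j \notin T)) ->
  spectral_radius B < s.
Proof.
move=> B0 z0 s0 Bz Hc; rewrite /spectral_radius big_seq; apply: bigmax_lt => // l Hl.
case: (eig_bound B0 z0 Bz Hl) => _ H2; rewrite ltNge; apply/negP => /H2 [T [T0 HT]].
case: (Hc T T0) => k kT [ne|[j Bkj jT]]; have [e f] := HT k kT.
  by rewrite e eqxx in ne.
by rewrite (f j Bkj) in jT.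
Qed.

Lemma cont_right (p : {poly R}) a : (forall u, a < u -> 0 <= p.[u]) -> 0 <= p.[a].
Proof.
move=> H; rewrite leNgt; apply/negP => pa.
have pa' : 0 < - p.[a] by rewrite oppr_gt0.
have [d d0 Hd] := poly_cont a p pa'.
have hu : a < a + d / 2%:R by rewrite ltrDl divr_gt0.
have hd : `|a + d / 2%:R - a| < d.
  by rewrite addrAC subrr add0r gtr0_norm ?divr_gt0 // ltr_pdivrMr // ltr_pMr // ltr1n.
have := le_lt_trans (ler_norm _) (Hd _ hd); have := H _ hu.
set q := p.[_]; set q0 := p.[a]; move=> h1 h2; lra.
Qed.

Lemma list_max (s : seq R) x : x \in s ->
  exists2 t, t \in s & forall y, y \in s -> y <= t.
Proof.
elim: s x => [//|a s IH] x; rewrite inE => _.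
case: s IH => [|b s] IH.
  by exists a; rewrite ?inE // => y; rewrite inE => /eqP ->.
case: (IH b); first by rewrite inE eqxx.
move=> t ts Ht; case: (leP a t) => ha.
  exists t; first by rewrite in_cons ts orbT.
  by move=> y; rewrite in_cons => /orP [/eqP ->|/Ht].
exists a; first by rewrite in_cons eqxx.
move=> y; rewrite in_cons => /orP [/eqP -> //|/Ht yt].
exact: le_trans yt (ltW ha).
Qed.

Lemma Qlem m (B : 'M[R]_m.+1) : nonneg_mx B -> exists r,
  root (char_poly B) r /\ forall u, r < u -> 0 < (char_poly B).[u] /\
  forall w : 'cV[R]_m.+1, (forall i, 0 <= ((u%:M - B) *m w) i 0) ->
    forall i, 0 <= w i 0.
Proof.
elim: m B => [|m IH] B B0.
  have hc u : (char_poly B).[u] = u - B 0 0.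
    by rewrite horner_char det_mx11 !mxE eqxx mulr1n.
  exists (B 0 0); split; first by rewrite /root hc subrr.
  move=> u hu; split; first by rewrite hc subr_gt0.
  move=> w Hw i; rewrite (ord1 i); have := Hw 0.
  rewrite mxE big_ord1 !mxE eqxx mulr1n.
  by rewrite pmulr_rge0 // subr_gt0.
pose B' : 'M[R]_(1 + m.+1) := B.
set b0 := ulsubmx B'; set c := ursubmx B'; set b := dlsubmx B'; set B1 := drsubmx B'.
have eB : B' = block_mx b0 c b B1 by rewrite submxK.
have B10 : nonneg_mx B1.
  by move=> i j; rewrite !mxE; exact: B0.
have c0 : forall j, 0 <= c 0 j by move=> j; rewrite !mxE; exact: B0.
have bp : forall i, 0 <= b i 0 by move=> i; rewrite !mxE; exact: B0.
case: (IH B1 B10) => r1 [r1root Hr1].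
have eC : forall u, (u%:M - B' : 'M_(1 + m.+1)) =
    block_mx (u%:M - b0) (- c) (- b) (u%:M - B1).
  move=> u; rewrite eB (scalar_mx_block 1 m.+1 u) opp_block_mx add_block_mx.
  by rewrite !add0r.
have F : forall u, r1 < u -> exists y : 'cV[R]_m.+1,
    [/\ (u%:M - B1) *m y = b, forall i, 0 <= y i 0 &
     (char_poly B).[u] = (u%:M - b0 - c *m y) 0 0 * (char_poly B1).[u]].
  move=> u hu; have [p1u HM1] := Hr1 u hu.
  have Cu : (u%:M - B1) \in unitmx by rewrite unitmxE unitfE -horner_char gt_eqF.
  exists (invmx (u%:M - B1) *m b); split.
  - by rewrite mulKVmx.
  - apply: HM1 => i; rewrite mulKVmx //; exact: bp.
  rewrite !horner_char; set y := invmx _ *m b.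
  pose L : 'M[R]_(1 + m.+1) := block_mx 1%:M 0 y 1%:M.
  have dL : \det L = 1 by rewrite det_lblock !det1 mulr1.
  have : (u%:M - B' : 'M_(1 + m.+1)) *m L =
      block_mx (u%:M - b0 - c *m y) (- c) 0 (u%:M - B1).
    rewrite eC mulmx_block !mulmx1 !mulmx0 !add0r mulNmx /y mulKVmx //.
    by rewrite addNr.
  move=> /(congr1 determinant); rewrite det_mulmx dL mulr1 det_ublock det_mx11.
  exact.
have gE : forall u (y : 'cV[R]_m.+1), (u%:M - b0 - c *m y) 0 0 =
    u - b0 0 0 - \sum_j c 0 j * y j 0.
  by move=> u y; rewrite !mxE eqxx mulr1n.
have cy0 : forall y : 'cV[R]_m.+1, (forall i, 0 <= y i 0) ->
    0 <= \sum_j c 0 j * y j 0.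
  by move=> y y0; apply: sumr_ge0 => j _; apply: mulr_ge0.
pose q := ('X - (b0 0 0)%:P) * char_poly B1 - char_poly B.
have hq : forall u, r1 < u -> 0 <= q.[u].
  move=> u hu; have [y [_ y0 hp]] := F u hu; have [p1u _] := Hr1 u hu.
  rewrite /q hornerD hornerN hornerM hornerXsubC hp gE subr_ge0.
  apply: ler_wpM2r; first exact: ltW.
  have := cy0 y y0; set S := \sum_j _; move=> S0; lra.
have pBr1 : (char_poly B).[r1] <= 0.
  have := cont_right hq; rewrite /q hornerD hornerN hornerM (rootP r1root).
  by rewrite mulr0 add0r oppr_ge0.
have pB0 : char_poly B != 0 by apply: monic_neq0; apply: char_poly_monic.
have lc1 : lead_coef (char_poly B) = 1 by apply/monicP/char_poly_monic.
have [N HN] : exists N, forall x, N <= x -> 1 <= (char_poly B).[x].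
  have [N HN] := @poly_pinfty_gt_lc _ (char_poly B) (ltac:(by rewrite lc1)).
  by exists N => x hx; rewrite -lc1; apply: HN.
have big : forall a, exists2 v, a <= v & 0 < (char_poly B).[v].
  move=> a; exists (Num.max N a); first by rewrite le_max lexx orbT.
  by apply: lt_le_trans ltr01 (HN _ _); rewrite le_max lexx.
have inR : forall x, root (char_poly B) x -> x \in rootsR (char_poly B).
  by move=> x rx; rewrite -(roots_on_rootsR pB0) in_itv /= rx.
have [v rv pv] := big r1.
have [x0 x0i x0r] := polyrcf.poly_ivt rv (mulr_le0_ge0 pBr1 (ltW pv)).
have [r rin rmax] := list_max (inR _ x0r).
have rroot : root (char_poly B) r.
  by have := roots_on_rootsR pB0 r; rewrite rin => /andP [].
have r1r : r1 <= r.
  apply: le_trans (rmax _ (inR _ x0r)); by move: x0i; rewrite in_itv /= => /andP [].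
exists r; split => // u hu.
have hu1 : r1 < u by apply: le_lt_trans hu.
have pu : 0 < (char_poly B).[u].
  rewrite ltNge; apply/negP => pu.
  have [v' rv' pv'] := big u.
  have [x1 x1i x1r] := polyrcf.poly_ivt rv' (mulr_le0_ge0 pu (ltW pv')).
  have := rmax _ (inR _ x1r); move: x1i; rewrite in_itv /= => /andP [h1 _] h2.
  by have := lt_le_trans hu (le_trans h1 h2); rewrite ltxx.
split => // w Hw.
have [y [Cy y0 hp]] := F u hu1; have [p1u HM1] := Hr1 u hu1.
have g0 : 0 < (u%:M - b0 - c *m y) 0 0.
  by move: pu; rewrite hp pmulr_lgt0.
pose w' : 'cV[R]_(1 + m.+1) := w.
set om := usubmx w'; set w1 := dsubmx w'.
have ew : w' = col_mx om w1 by rewrite vsubmxK.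
have Hw2 : forall i, 0 <= ((u%:M - B' : 'M_(1 + m.+1)) *m w') i 0 := Hw.
rewrite eC ew mul_block_col !mulNmx in Hw2.
have ebo : b *m om = om 0 0 *: b by rewrite {1}(mx11_scalar om) mul_mx_scalar.
have eao : (u%:M - b0) *m om = om 0 0 *: (u%:M - b0).
  by rewrite {1}(mx11_scalar om) mul_mx_scalar.
pose vv := w1 - om 0 0 *: y.
have ev : - (b *m om) + (u%:M - B1) *m w1 = (u%:M - B1) *m vv.
  by rewrite /vv mulmxBr -scalemxAr Cy ebo addrC.
have v0 : forall i, 0 <= vv i 0.
  apply: HM1 => i; rewrite -ev; have := Hw2 (rshift 1 i); rewrite col_mxEd.
  by [].
have ew1 : w1 = vv + om 0 0 *: y by rewrite /vv subrK.
have om0 : 0 <= om 0 0.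
  have := Hw2 (lshift m.+1 0); rewrite col_mxEu eao ew1 mulmxDr -scalemxAr.
  rewrite !mxE eqxx mulr1n => h.
  have cv0 := cy0 vv v0; move: g0; rewrite gE !mxE => g0.
  move: h cv0 g0; set W := w' _ 0; set S1 := \sum_j _; set S2 := \sum_j _.
  set b00 := B' _ _ => h cv0 g0.
  have : 0 <= W * (u - b00 - S2).
    have -> : W * (u - b00 - S2) = W * (u - b00) - (S1 + W * S2) + S1 by ring.
    exact: addr_ge0.
  by rewrite pmulr_lge0.
move=> i; change (0 <= w' i 0); rewrite ew.
case: (splitP (i : 'I_(1 + m.+1))) => j hj.
  have -> : (i : 'I_(1 + m.+1)) = lshift m.+1 j by apply/val_inj.
  by rewrite col_mxEu (ord1 j).
have -> : (i : 'I_(1 + m.+1)) = rshift 1 j by apply/val_inj.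
rewrite col_mxEd ew1 [X in 0 <= X]mxE; apply: addr_ge0; first exact: v0.
by rewrite [X in 0 <= X]mxE; apply: mulr_ge0.
Qed.

Lemma real_root_eig n (B : 'M[R]_n) r :
  root (char_poly B) r -> r%:C \in eigenvalues B.
Proof.
move=> rr; rewrite /eigenvalues; case: closed_field_poly_normal => l Hl /=.
have : root (char_poly (map_mx (fun r : R => r%:C) B)) r%:C.
  have := rmorph_root (real_complex R) rr; rewrite map_char_poly.
  by [].
rewrite Hl rootZ ?root_prod_XsubC //.
by rewrite (monicP (char_poly_monic _)) oner_neq0.
Qed.

Lemma spec_lb m (B : 'M[R]_m.+1) (z : 'cV[R]_m.+1) s :
  nonneg_mx B -> (forall i, 0 < z i 0) ->
  (forall i, s * z i 0 <= (B *m z) i 0) -> s <= spectral_radius B.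
Proof.
move=> B0 z0 Bz; case: (Qlem B0) => r [rr Hr].
have sr : s <= r.
  rewrite leNgt; apply/negP => rs; have [_ HM] := Hr s rs.
  have : forall i, 0 <= ((s%:M - B) *m (- z)) i 0.
    move=> i; rewrite mulmxN mulmxBl mul_scalar_mx opprB !mxE.
    by rewrite subr_ge0; have := Bz i; rewrite mxE.
  move=> /HM /(_ 0); rewrite mxE oppr_ge0 => /(lt_le_trans (z0 0)).
  by rewrite ltxx.
apply: (le_trans sr); apply: le_trans (ler_norm r) _.
rewrite -normc_real /spectral_radius.
by apply: le_bigmax_seq => //; apply: real_root_eig.
Qed.

Lemma exists_max_in (I : finType) (A : {set I}) (i0 : I) (f : I -> R) :
  i0 \in A -> exists2 k, k \in A & forall j, j \in A -> f j <= f k.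
Proof.
move=> Pi0; case: (@arg_maxP _ _ _ i0 (fun i => i \in A) f Pi0) => k Pk H.
by exists k.
Qed.

Lemma rearr n (a x : 'I_n -> R) (phi : 'S_n) :
  (forall j k, x k < x j -> a k <= a j) ->
  \sum_j a (phi j) * x j <= \sum_j a j * x j.
Proof.
move=> Hax.
suff : forall N (phi : 'S_n), (#|[set j | phi j != j]| <= N)%N ->
  \sum_j a (phi j) * x j <= \sum_j a j * x j by apply; apply: leqnn.
elim=> [|N IH] {}phi.
  rewrite leqn0 cards_eq0 => /eqP H.
  have -> : phi = 1%g.
    apply/permP => j; rewrite perm1; apply/eqP/negPn/negP => hj.
    have hj' : j \in [set j | phi j != j] by rewrite inE hj.
    by rewrite H inE in hj'.
  by rewrite le_eqVlt; apply/orP; left; apply/eqP; apply: eq_bigr => j _; rewrite perm1.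
set D := [set j | phi j != j] => HD.
have [D0|[d0 d0D]] := set_0Vmem D.
  by apply: IH; rewrite -/D D0 cards0.
have [k1 k1D Hk1] := exists_max_in x d0D.
pose D' := [set j in D | x j == x k1].
have k1D' : k1 \in D'
  by rewrite inE k1D eqxx.
have [j0 j0D' Hj0] := exists_max_in a k1D'.
move: (j0D'); rewrite inE => /andP [j0D /eqP xj0].
have Dprop : forall k, k \in D -> x k <= x j0 /\ a k <= a j0.
  move=> k kD; have xk := Hk1 _ kD; rewrite xj0; split => //.
  move: xk; rewrite le_eqVlt => /orP [/eqP xe|xl].
    by apply: Hj0; rewrite inE kD xe eqxx.
  by apply: Hax; rewrite xj0.
pose p := (phi^-1)%g j0.
have php : phi p = j0 by rewrite /p permKV.
have pD : p \in D.
  rewrite inE; apply/negP => /eqP pp; move: j0D; rewrite inE -php pp.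
  by rewrite pp eqxx.
have pj0D : phi j0 \in D.
  rewrite inE (inj_eq (@perm_inj _ phi)); by move: j0D; rewrite inE.
have pj0 : p != j0.
  apply/eqP => e; move: php; rewrite e => /eqP; move: j0D; rewrite inE.
  by move=> /negPf ->.
pose t := tperm p j0.
pose psi := (t * phi)%g.
have psiE : forall j, psi j = phi (t j) by move=> j; rewrite permM.
have step : \sum_j a (phi j) * x j <= \sum_j a (psi j) * x j.
  rewrite -subr_ge0.
  have -> : \sum_j a (psi j) * x j = \sum_j a (phi j) * x (t j).
    rewrite (reindex_inj (@perm_inj _ t)) /=; apply: eq_bigr => j _.
    by rewrite psiE /t tpermK.
  rewrite -sumrB (bigD1 p) //= (bigD1 j0) //=.
  rewrite [X in _ + (_ + X)]big1 ?addr0; last first.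
    by move=> j /andP [jp jj0]; rewrite /t tpermD 1?eq_sym // subrr.
  rewrite /t tpermL tpermR php.
  have [h1 h2] := Dprop _ pD; have [h3 h4] := Dprop _ pj0D.
  have -> : a j0 * x j0 - a j0 * x p + (a (phi j0) * x p - a (phi j0) * x j0)
     = (a j0 - a (phi j0)) * (x j0 - x p) by ring.
  by apply: mulr_ge0; rewrite subr_ge0.
by rewrite eq_sym.
apply: le_trans step (IH _ _).
have sub : [set j | psi j != j] \subset D :\ j0.
  apply/subsetP => j; rewrite !inE psiE.
  have [->|jj0] := eqVneq j j0; first by rewrite /t tpermR php eqxx.
  have [->|jp] := eqVneq j p; first by move: pD; rewrite inE => ->.
  by rewrite /t tpermD 1?eq_sym.
have := subset_leq_card sub; move: HD; rewrite -/D (cardsD1 j0 D) j0D /= add1n => HD h.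
by rewrite -ltnS; apply: leq_ltn_trans h _.
Qed.

Lemma pow_nonneg m (B : 'M[R]_m.+1) e : nonneg_mx B -> nonneg_mx ((1 + B) ^+ e).
Proof.
move=> B0; elim: e => [|e IH] i j.
  by rewrite expr0 mxE ler0n.
rewrite exprS -mulmxE mxE; apply: sumr_ge0 => k _; apply: mulr_ge0 => //.
by rewrite !mxE addr_ge0 // ler0n.
Qed.

Lemma mul_nonneg m (P : 'M[R]_m.+1) (v : 'cV[R]_m.+1) :
  nonneg_mx P -> (forall i, 0 <= v i 0) -> forall i, 0 <= (P *m v) i 0.
Proof. by move=> P0 v0 i; rewrite mxE; apply: sumr_ge0 => k _; apply: mulr_ge0. Qed.

Lemma reach m (B : 'M[R]_m.+1) i0 : nonneg_mx B ->
  (forall T : {set 'I_m.+1}, T != setT -> i0 \in T ->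
     exists k j, [/\ k \notin T, j \in T & B k j != 0]) ->
  forall k, exists e, 0 < ((1 + B) ^+ e *m delta_mx i0 (0 : 'I_1)) k 0.
Proof.
move=> B0 HB.
pose v e := (1 + B) ^+ e *m delta_mx i0 (0 : 'I_1).
have v0 : forall e i, 0 <= v e i 0.
  move=> e; apply: mul_nonneg; first exact: pow_nonneg.
  by move=> i; rewrite mxE ler0n.
have vS : forall e k j, B k j * v e j 0 <= v e.+1 k 0.
  move=> e k j; rewrite /v exprS -mulmxE -mulmxA mulmxDl mul1mx -/(v e).
  rewrite [X in _ <= X]mxE; apply: le_trans (_ : _ <= (B *m v e) k 0) _.
    rewrite [(B *m _) k 0]mxE (bigD1 j) //= lerDl; apply: sumr_ge0 => l _.
    by apply: mulr_ge0.
  by rewrite lerDr.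
pose Sb k := if excluded_middle_informative (exists e, 0 < v e k 0) then true
  else false.
have SbP : forall k, Sb k -> exists e, 0 < v e k 0.
  by move=> k; rewrite /Sb; case: excluded_middle_informative.
have SbP' : forall k e, 0 < v e k 0 -> Sb k.
  move=> k e h; rewrite /Sb; case: excluded_middle_informative => // H.
  by case: H; exists e.
have all : [set k | Sb k] = setT.
  apply/eqP; apply/negPn/negP => hT.
  have i0T : i0 \in [set k | Sb k].
    rewrite inE; apply: (SbP' _ 0); rewrite /v expr0 mul1mx mxE !eqxx /=.
    exact: ltr01.
  have [k [j [kT jT Bkj]]] := HB _ hT i0T.
  move: jT; rewrite inE => /SbP [e he].
  move: kT; rewrite inE => /negP; apply; apply: (SbP' _ e.+1).
  apply: lt_le_trans (vS e k j); apply: mulr_gt0 => //.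
  by rewrite lt_def Bkj B0.
move=> k; apply: SbP; have : k \in [set k | Sb k] by rewrite all inE.
by rewrite inE.
Qed.

Lemma irr_cut n (A : 'M[R]_n) : irreducible_mx A -> forall S : {set 'I_n},
  S != set0 -> S != setT -> exists i j, [/\ i \in S, j \notin S & A i j != 0].
Proof.
move=> HA S S0 ST.
case: (boolP [exists i, [exists j, [&& i \in S, j \notin S & A i j != 0]]]).
  by move=> /existsP [i /existsP [j /and3P [? ? ?]]]; exists i, j.
rewrite negb_exists => /forallP H; case: HA; exists S; split => // i j iS jS.
apply/eqP; move: (H i); rewrite negb_exists => /forallP /(_ j).
by rewrite iS jS /= negbK.
Qed.

Definition swapB n (A : 'M[R]_n) (i j k : 'I_n) : 'M[R]_n :=
  \matrix_(r, c) A r (if r == i then tperm j k c else c).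

Lemma swap_omega n (A : 'M[R]_n) i j k : nonneg_mx A -> Omega A (swapB A i j k).
Proof.
move=> A0; split; first by move=> r c; rewrite mxE.
move=> r; exists (if r == i then tperm j k else 1%g) => c; rewrite mxE.
by case: (r == i); rewrite ?perm1.
Qed.

Lemma swap_other n (A : 'M[R]_n) (x : 'cV[R]_n) i j k r : r != i ->
  (swapB A i j k *m x) r 0 = (A *m x) r 0.
Proof.
by move=> ri; rewrite !mxE; apply: eq_bigr => c _; rewrite mxE (negPf ri).
Qed.

Lemma swap_entry_other n (A : 'M[R]_n) i j k r c : r != i ->
  swapB A i j k r c = A r c.
Proof. by move=> ri; rewrite mxE (negPf ri). Qed.

Lemma swap_i n (A : 'M[R]_n) (x : 'cV[R]_n) i j k : j != k ->
  (swapB A i j k *m x) i 0 =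
  (A *m x) i 0 + (A i k - A i j) * (x j 0 - x k 0).
Proof.
move=> jk.
have -> : (swapB A i j k *m x) i 0 = \sum_c A i c * x (tperm j k c) 0.
  rewrite mxE (reindex_inj (@perm_inj _ (tperm j k))) /=.
  by apply: eq_bigr => c _; rewrite mxE eqxx tpermK.
rewrite mxE; apply/eqP; rewrite -subr_eq0 opprD addrA -sumrB.
rewrite (bigD1 j) //= (bigD1 k) 1?eq_sym //=.
rewrite [X in _ + (_ + X) - _]big1 ?addr0; last first.
  by move=> c /andP [cj ck]; rewrite tpermD 1?eq_sym // subrr.
rewrite tpermL tpermR; apply/eqP; ring.
Qed.
End P1.
Unset Implicit Arguments.
Local Close Scope complex_scope.
Lemma zmodK (V : zmodType) (a b : V) : a + b - a = b.
Proof. by rewrite addrAC subrr add0r. Qed.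

Theorem theorem3p4 (R : rcfType) (n : nat) (A : 'M[R]_n) (x : 'cV[R]_n) :
  nonneg_mx A -> irreducible_mx A ->
  perron_eigenvector A x -> (forall i, 0 < x i 0) ->
  ((forall B, Omega A B -> spectral_radius B <= spectral_radius A) <->
     (forall i j k : 'I_n, x k 0 < x j 0 -> A i k <= A i j))
  /\
  ((forall B, Omega A B -> spectral_radius A <= spectral_radius B) <->
     (forall i j k : 'I_n, x k 0 < x j 0 -> A i j <= A i k)).
Proof.
move=> A0 Airr [xn0 _ Ax] xpos.
case: n A x A0 Airr xn0 Ax xpos => [|m] A x A0 Airr xn0 Ax xpos.
  by rewrite flatmx0 eqxx in xn0.
set rho := spectral_radius A in Ax *.
have Axi : forall i, (A *m x) i 0 = rho * x i 0 by move=> i; rewrite Ax mxE.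
have xnn : forall i, 0 <= x i 0 by move=> i; apply: ltW.
have rho0 : 0 <= rho.
  have := mul_nonneg A0 xnn 0; rewrite Axi pmulr_lge0 //.
have Bxrow : forall (B : 'M[R]_m.+1) (phi : 'S_m.+1) r, (forall c, B r c = A r (phi c)) ->
    (B *m x) r 0 = \sum_c A r (phi c) * x c 0.
  by move=> B phi r HB; rewrite mxE; apply: eq_bigr => c _; rewrite HB.
have Axrow : forall r, (A *m x) r 0 = \sum_c A r c * x c 0.
  by move=> r; rewrite mxE.
split; split.
- move=> H i j k xkj; rewrite leNgt; apply/negP => Aijk.
  have jk : j != k by apply: contraTneq xkj => ->; rewrite ltxx.
  pose B := swapB A i j k.
  have hB : Omega A B := swap_omega i j k A0.
  have B0 : nonneg_mx B := hB.1.
  pose d := (A i k - A i j) * (x j 0 - x k 0).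
  have d0 : 0 < d by apply: mulr_gt0; rewrite subr_gt0.
  pose dl := delta_mx i (0 : 'I_1) : 'cV[R]_m.+1.
  have BxM : B *m x = rho *: x + d *: dl.
    apply/matrixP => r c; rewrite (ord1 c).
    case: (eqVneq r i) => [->|ri].
      by rewrite swap_i // Axi !mxE !eqxx /= mulr1.
    by rewrite /B swap_other // Axi !mxE (negPf ri) /= mulr0 addr0.
  have hyp : forall T : {set 'I_m.+1}, T != setT -> i \in T ->
      exists k j, [/\ k \notin T, j \in T & B k j != 0].
    move=> T TT iT.
    have S0 : ~: T != set0.
      apply: contra TT => /eqP h; apply/eqP; rewrite -[T]setCK h setC0.
      by [].
    have ST : ~: T != setT.
      apply/negP => /eqP h; have : i \in ~: T by rewrite h inE.
      by rewrite inE iT.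
    have [a [b [aT bT Aab]]] := irr_cut Airr S0 ST.
    exists a, b; move: aT bT; rewrite !inE negbK => aT bT; split => //.
    have ai : a != i by apply: contraNneq aT => ->.
    by rewrite /B swap_entry_other.
  have [ef Hef] := fin_all_exists (reach B0 hyp).
  pose P l := (1 + B) ^+ ef l.
  pose z := x + \sum_l P l *m x.
  have PB : forall l (v : 'cV[R]_m.+1), B *m (P l *m v) = P l *m (B *m v).
    move=> l v; rewrite !mulmxA !mulmxE; congr (_ *m v).
    apply: commrX; apply: commrD; [exact: commr1|exact: commr_refl].
  have ED : B *m z - rho *: z = d *: dl + \sum_l d *: (P l *m dl).
    rewrite /z mulmxDr mulmx_sumr.
    under eq_bigr do rewrite PB BxM mulmxDr -!scalemxAr.
    rewrite big_split /= BxM scalerDr scaler_sumr.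
    rewrite addrACA; exact: zmodK.
  have Pd0 : forall l r, 0 <= (P l *m dl) r 0.
    move=> l; apply: mul_nonneg; first exact: pow_nonneg.
    by move=> r; rewrite mxE ler0n.
  pose Dv r := (B *m z - rho *: z) r 0.
  have Dpos : forall r, 0 < Dv r.
    move=> r; rewrite /Dv ED mxE summxE.
    apply: lt_le_trans (_ : 0 < d * (P r *m dl) r 0) _.
      by apply: mulr_gt0 => //; apply: Hef.
    rewrite [X in _ <= _ + X](bigD1 r) //= [(d *: (P r *m dl)) r 0]mxE addrCA lerDl.
    apply: addr_ge0.
      by rewrite mxE; apply: mulr_ge0; [exact: ltW|rewrite mxE ler0n].
    by apply: sumr_ge0 => l _; rewrite mxE; apply: mulr_ge0; [exact: ltW|].
  have zpos : forall r, 0 < z r 0.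
    move=> r; rewrite /z mxE summxE; apply: lt_le_trans (xpos r) _.
    rewrite lerDl; apply: sumr_ge0 => l _; apply: mul_nonneg => //.
    exact: pow_nonneg.
  have [k0 Hk0] := exists_max 0 (fun r => - (Dv r / z r 0)).
  pose eps := Dv k0 / z k0 0.
  have eps0 : 0 < eps by apply: divr_gt0.
  have Bz : forall r, (rho + eps) * z r 0 <= (B *m z) r 0.
    move=> r; have := Hk0 r; rewrite lerN2 -/eps ler_pdivlMr // => h.
    move: h; rewrite /Dv !mxE => h; lra.
  have := le_trans (spec_lb B0 zpos Bz) (H B hB); lra.
- move=> Hc B [B0 HB]; apply: (spec_ub B0 xpos rho0) => r.
  have [phi Hphi] := HB r; rewrite (Bxrow _ _ _ Hphi) -Axi Axrow.
  apply: rearr => j k; exact: Hc.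
- move=> H i j k xkj; rewrite leNgt; apply/negP => Aikj.
  have jk : j != k by apply: contraTneq xkj => ->; rewrite ltxx.
  pose B := swapB A i j k.
  have hB : Omega A B := swap_omega i j k A0.
  have B0 : nonneg_mx B := hB.1.
  have neg : (A i k - A i j) * (x j 0 - x k 0) < 0.
    by rewrite mulrC pmulr_rlt0 ?subr_gt0 // subr_lt0.
  have Bxi : (B *m x) i 0 < rho * x i 0.
    rewrite /B swap_i // Axi; move: neg; set t := _ * _; move=> neg; lra.
  have Bxle : forall r, (B *m x) r 0 <= rho * x r 0.
    move=> r; case: (eqVneq r i) => [->|ri]; first exact: ltW.
    by rewrite /B swap_other // Axi.
  have rhop : 0 < rho.
    have := le_lt_trans (mul_nonneg B0 xnn i) Bxi.
    by rewrite pmulr_lgt0.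
  have := H B hB; apply/negP; rewrite -ltNge.
  apply: (spec_ub_strict B0 xpos rhop Bxle) => T T0.
  case: (boolP (i \in T)) => iT.
    by exists i => //; left; rewrite lt_eqF.
  have TT : T != setT by apply: contraNneq iT => ->; rewrite inE.
  have [a [b [aT bT Aab]]] := irr_cut Airr T0 TT.
  exists a => //; right; exists b => //.
  have ai : a != i by apply: contraNneq iT => <-.
  by rewrite /B swap_entry_other.
- move=> Hc B [B0 HB]; apply: (@spec_lb R m B x rho B0 xpos) => r.
  have [phi Hphi] := HB r; rewrite (Bxrow _ _ _ Hphi) -Axi Axrow.
  rewrite -lerN2 -!sumrN.
  under eq_bigr do rewrite -mulNr.
  under [X in _ <= X]eq_bigr do rewrite -mulNr.
  by apply: rearr => j k h; rewrite lerN2; apply: Hc.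
Qed.
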